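(* Let $G$ be a group with a conjugation-closed generating set $X$ and let $g\in\mathrm{Mon}(X)$. Then $\mathrm{Fact}(G,g,\mathbf I)$ is isomorphic to the poset of nonempty chains of the interval $[1,g]$, ordered by inclusion.
   Context: $\mathrm{Mon}(X)$ is the submonoid generated by $X$; $\ell(x)$ is the minimal length of a product of elements of $X$ equal to $x$; $x\le y$ if there is $x'\in\mathrm{Mon}(X)$ with $xx'=y$ and $\ell(x)+\ell(x')=\ell(y)$; $[1,g]=\{x:x\le g\}$ with this order. A chain is a set $\{y_0<y_1<\cdots<y_k\}$ of elements of $[1,g]$. A linear factorization of $g$ is a row vector $[x_L\ x_1\ \cdots\ x_k\ x_R]$ ($k\ge0$) of elements of $\mathrm{Mon}(X)$ with $x_1,\dots,x_k\ne1$ ($x_L,x_R$ may be trivial), $\ell(x_L)+\ell(x_1)+\cdots+\ell(x_k)+\ell(x_R)=\ell(g)$ and $x_Lx_1\cdots x_kx_R=g$. Writing $x_0=x_L$, $x_{k+1}=x_R$, the merge at position $i\in\{0,\dots,k\}$ replaces the consecutive entries $x_i,x_{i+1}$ by the single entry $x_ix_{i+1}$ (giving a linear factorization with one fewer entry). $\mathrm{Fact}(G,g,\mathbf I)$ is the set of linear factorizations of $g$ with $\mathbf x\le\mathbf y$ iff $\mathbf x$ is obtained from $\mathbf y$ by a finite sequence of merges. *)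

(* Defs.v *)
From Stdlib Require Import ClassicalDescription Relation_Operators List.
From mathcomp Require Import all_boot.

Set Implicit Arguments.
Unset Strict Implicit.
Unset Printing Implicit Defensive.

Record GroupT := {
  carrier :> Type;
  gmul : carrier -> carrier -> carrier;
  gone : carrier;
  ginv : carrier -> carrier;
  gmulA : forall x y z, gmul x (gmul y z) = gmul (gmul x y) z;
  gmul1l : forall x, gmul gone x = x;
  gmul1r : forall x, gmul x gone = x;
  gmulVl : forall x, gmul (ginv x) x = gone;
  gmulVr : forall x, gmul x (ginv x) = gone
}.

Section Defs.
Variable G : GroupT.
Implicit Types (X : G -> Prop) (x y g : G).


Definition wprod (w : seq G) : G := foldr (@gmul G) (gone G) w.

Definition conj_closed X := forall x h, X x -> X (gmul (gmul (ginv h) x) h).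

Definition generates X :=
  forall g, exists w : seq G,
    List.Forall (fun y => X y \/ X (ginv y)) w /\ wprod w = g.

Definition word_of_length X x n :=
  exists w : seq G, List.Forall X w /\ size w = n /\ wprod w = x.

Definition Mon X x := exists n, word_of_length X x n.

(* ell(x): the minimal length of a product of elements of X equal to x
   (junk value 0 when x is not in Mon(X)) *)
Definition ell X x : nat :=
  match excluded_middle_informative (Mon X x) with
  | left H =>
      @ex_minn (fun n => is_left (excluded_middle_informative
                                    (word_of_length X x n)))
        (let: ex_intro n Hn := H in
         ex_intro _ n (match excluded_middle_informative (word_of_length X x n)
                          as b return Datatypes.is_true (is_left b) with
                       | left _ => erefl
                       | right Hn' => False_ind _ (Hn' Hn) end))
  | right _ => 0
  end.

Definition ple X x y :=
  Mon X x /\ exists x', Mon X x' /\ gmul x x' = y /\ ell X x + ell X x' = ell X y.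

Definition interval X g x := ple X x g.

Definition is_chain X g (C : G -> Prop) :=
  (exists x, C x) /\
  (exists l : list G, forall x, C x -> List.In x l) /\
  (forall x, C x -> interval X g x) /\
  (forall x y, C x -> C y -> ple X x y \/ ple X y x).

Definition Chain X g := { C : G -> Prop | is_chain X g C }.

Definition chain_le X g (C D : Chain X g) := forall x, proj1_sig C x -> proj1_sig D x.

(* linear factorizations [x_L x_1 ... x_k x_R] as sequences of length k+2 *)
Definition is_linfact X g (s : seq G) :=
  2 <= size s /\
  List.Forall (Mon X) s /\
  (forall i, 0 < i -> i.+1 < size s -> nth (gone G) s i <> gone G) /\
  \sum_(y <- s) ell X y = ell X g /\
  wprod s = g.

Definition LinFact X g := { s : seq G | is_linfact X g s }.

Definition merge (i : nat) (s : seq G) : seq G :=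
  take i s ++ (gmul (nth (gone G) s i) (nth (gone G) s i.+1)) :: drop i.+2 s.

Definition merge_step (s t : seq G) := exists i, i.+1 < size s /\ t = merge i s.

Definition fact_le X g (a b : LinFact X g) :=
  clos_refl_trans (seq G) merge_step (proj1_sig b) (proj1_sig a).

End Defs.

Definition order_iso (A B : Type) (leA : A -> A -> Prop) (leB : B -> B -> Prop) :=
  exists f : A -> B, bijective f /\ forall a b, leA a b <-> leB (f a) (f b).

(* Main.v *)
Require Import Defs.
From Stdlib Require Import ClassicalDescription IndefiniteDescription Classical ProofIrrelevance FunctionalExtensionality PropExtensionality Relation_Operators List.
From mathcomp Require Import all_boot.
Set Implicit Arguments.
Unset Strict Implicit.
Unset Printing Implicit Defensive.

Section S.
Variable G : GroupT.
Variable X : G -> Prop.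
Variable g : G.
Local Notation "1" := (gone G).
Local Notation "x * y" := (gmul x y).
Local Notation "x ^-1" := (ginv x).

Lemma ginv1 : (gone G)^-1 = 1.
Proof. by rewrite -[LHS]gmul1l gmulVr. Qed.
Lemma gKl (p x : G) : p^-1 * (p * x) = x.
Proof. by rewrite gmulA gmulVl gmul1l. Qed.
Lemma gKr (p x : G) : p * (p^-1 * x) = x.
Proof. by rewrite gmulA gmulVr gmul1l. Qed.
Lemma gsolve (p x y : G) : p * x = y -> x = p^-1 * y.
Proof. by move=> <-; rewrite gKl. Qed.

Lemma wprod_cat (w1 w2 : seq G) : wprod (w1 ++ w2) = wprod w1 * wprod w2.
Proof. elim: w1 => [|a w IH] /=; first by rewrite gmul1l. by rewrite IH gmulA. Qed.

Lemma ell_spec x : Mon X x -> word_of_length X x (ell X x).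
Proof.
rewrite /ell; case: excluded_middle_informative => // H _.
case: ex_minnP => m; case: excluded_middle_informative => //.
Qed.

Lemma ell_min x n : word_of_length X x n -> ell X x <= n.
Proof.
move=> Hw; rewrite /ell; case: excluded_middle_informative => [H|H]; last done.
case: ex_minnP => m _ Hm; apply: Hm.
by case: excluded_middle_informative.
Qed.

Lemma Mon1 : Mon X 1.
Proof. by exists 0, [::]. Qed.
Lemma ell1 : ell X 1 = 0.
Proof. apply/eqP; rewrite -leqn0; apply: ell_min; by exists [::]. Qed.

Lemma ell0 x : Mon X x -> ell X x = 0 -> x = 1.
Proof. move=> /ell_spec [w [_ [Hs Hp]]] H0; rewrite H0 in Hs.
by case: w Hs Hp => // _ <-. Qed.

Lemma word_mul x y n m : word_of_length X x n -> word_of_length X y m ->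
  word_of_length X (x * y) (n + m).
Proof.
move=> [w1 [F1 [S1 P1]]] [w2 [F2 [S2 P2]]]; exists (w1 ++ w2); split.
  by apply Forall_app.
by rewrite size_cat S1 S2 wprod_cat P1 P2.
Qed.

Lemma MonM x y : Mon X x -> Mon X y -> Mon X (x * y).
Proof. move=> [n Hn] [m Hm]; exists (n + m); exact: word_mul. Qed.

Lemma ell_sub x y : Mon X x -> Mon X y -> ell X (x * y) <= ell X x + ell X y.
Proof. move=> Hx Hy; apply: ell_min; apply: word_mul; exact: ell_spec. Qed.

Lemma Mon_wprod (s : seq G) : List.Forall (Mon X) s ->
  Mon X (wprod s) /\ ell X (wprod s) <= \sum_(y <- s) ell X y.
Proof.
elim: s => [|a s IH] F /=; first by rewrite big_nil ell1; split => //; exact: Mon1.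
inversion F; subst. have [M1 L1] := IH H2.
split; first exact: MonM.
rewrite big_cons; apply: leq_trans (ell_sub H1 M1) _; by rewrite leq_add2l.
Qed.

Lemma ple_of a b : Mon X a -> Mon X b -> ell X a + ell X b <= ell X (a * b) -> ple X a (a * b).
Proof.
move=> Ha Hb H; split => //; exists b; split => //; split => //.
apply/eqP; rewrite eqn_leq H /=; exact: ell_sub.
Qed.

Lemma ple_refl x : Mon X x -> ple X x x.
Proof. move=> Hx; have := ple_of Hx Mon1; rewrite gmul1r ell1 addn0; apply. by []. Qed.

Lemma ple_Mon2 x y : ple X x y -> Mon X y.
Proof. by move=> [Hx [x' [Hx' [<- _]]]]; exact: MonM. Qed.

Lemma ple_trans x y z : ple X x y -> ple X y z -> ple X x z.
Proof.
move=> [Hx [a [Ha [Ea La]]]] [Hy [b [Hb [Eb Lb]]]].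
split => //; exists (a * b); split; first exact: MonM.
split; first by rewrite gmulA Ea.
apply/eqP; rewrite eqn_leq; apply/andP; split.
  rewrite -Lb -La -addnA leq_add2l; exact: ell_sub.
rewrite -Eb -Ea -gmulA; apply: ell_sub => //; exact: MonM.
Qed.

Definition lt x y := ple X x y /\ ell X x < ell X y.

Lemma lt_trans x y z : lt x y -> lt y z -> lt x z.
Proof. move=> [A B] [C D]; split; [exact: ple_trans A C | exact: ltn_trans B D]. Qed.
Lemma lt_irr x : ~ lt x x.
Proof. by move=> [_]; rewrite ltnn. Qed.

Lemma ple_lt x y : ple X x y -> x <> y -> lt x y.
Proof.
move=> H Hne; split => //; case: H => Hx [a [Ha [Ea La]]].
rewrite -La -[X in X < _]addn0 ltn_add2l lt0n; apply/negP => /eqP E.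
apply: Hne; by rewrite -Ea (ell0 Ha E) gmul1r.
Qed.


Fixpoint pps (acc : G) (s : seq G) : seq G :=
  match s with
  | [::] => [::]
  | x :: s' => if s' is [::] then [::] else (acc * x) :: pps (acc * x) s'
  end.

Lemma pps_cons acc x s : s <> [::] -> pps acc (x :: s) = (acc * x) :: pps (acc * x) s.
Proof. by case: s. Qed.

Lemma size_pps acc s : size (pps acc s) = (size s).-1.
Proof. elim: s acc => [|x s IH] acc //=; case: s IH => //= y s IH; by rewrite IH. Qed.

Lemma merge0 (x y : G) r : Defs.merge 0 [:: x, y & r] = (x * y) :: r.
Proof. by rewrite /Defs.merge /= drop0. Qed.
Lemma mergeS i (x : G) s : Defs.merge i.+1 (x :: s) = x :: Defs.merge i s.
Proof. reflexivity. Qed.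

Lemma merge_props i s : i.+1 < size s ->
  size (Defs.merge i s) = (size s).-1 /\ wprod (Defs.merge i s) = wprod s /\
  forall acc, pps acc (Defs.merge i s) = take i (pps acc s) ++ drop i.+1 (pps acc s).
Proof.
elim: i s => [|i IH] [|x [|y r]] // Hs.
- rewrite merge0; split; first by [].
  split; first by rewrite /= gmulA.
  move=> acc; case: r {Hs} => [|z r] //=; by rewrite ?drop0 gmulA.
- rewrite mergeS.
  have [S [W P]] := IH (y :: r) Hs.
  have Hne : Defs.merge i (y :: r) <> [::].
    by move=> E; move: S Hs; rewrite E /= => <-.
  split; first by rewrite /= S.
  split; first by rewrite /= W.
  move=> acc; rewrite pps_cons // P; reflexivity.
Qed.

Fixpoint rb (p : G) (ys : seq G) : seq G :=
  match ys with
  | [::] => [:: p^-1 * g]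
  | y :: ys' => (p^-1 * y) :: rb y ys'
  end.

Lemma rb_nil p ys : rb p ys <> [::].
Proof. by case: ys. Qed.

Lemma wprod_rb p ys : wprod (rb p ys) = p^-1 * g.
Proof.
elim: ys p => [|y ys IH] p /=; first by rewrite gmul1r.
by rewrite IH -gmulA gKr.
Qed.

Lemma pps_rb p ys : pps p (rb p ys) = ys.
Proof.
elim: ys p => [|y ys IH] p //.
rewrite [rb _ _]/= pps_cons; [by rewrite gKr IH | exact: rb_nil].
Qed.

Lemma rb_pps p s : s <> [::] -> p * wprod s = g -> rb p (pps p s) = s.
Proof.
elim: s p => [|x s IH] p // _ /=.
case: s IH => [|y s] IH /= E.
  by rewrite -E gmul1r gKl.
rewrite gKl IH //. by rewrite -E gmulA.
Qed.

Fixpoint ssorted (R : G -> G -> Prop) (l : seq G) : Prop :=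
  match l with
  | [::] => True
  | x :: l' => (forall y, List.In y l' -> R x y) /\ ssorted R l'
  end.

Lemma ssorted_uniq (R : G -> G -> Prop) :
  (forall x, ~ R x x) -> (forall x y z, R x y -> R y z -> R x z) ->
  forall l1 l2, ssorted R l1 -> ssorted R l2 ->
  (forall x, List.In x l1 <-> List.In x l2) -> l1 = l2.
Proof.
move=> Hirr Htr; elim=> [|a l1 IH] [|b l2] //=.
- by move=> _ _ /(_ b) [_ /(_ (or_introl erefl))].
- by move=> _ _ /(_ a) [/(_ (or_introl erefl))].
move=> [Ha S1] [Hb S2] E.
have Hab : a = b.
  case: (proj1 (E a) (or_introl erefl)) => // Ia.
  case: (proj2 (E b) (or_introl erefl)) => // Ib.
  by case: (Hirr a (Htr _ _ _ (Ha _ Ib) (Hb _ Ia))).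
subst b; congr (_ :: _); apply: IH => // x; split => Hx.
- case: (proj1 (E x) (or_intror Hx)) => // ex; subst x.
  by case: (Hirr a (Ha _ Hx)).
- case: (proj2 (E x) (or_intror Hx)) => // ex; subst x.
  by case: (Hirr a (Hb _ Hx)).
Qed.

Lemma ssorted_del (R : G -> G -> Prop) l1 y l2 :
  ssorted R (l1 ++ y :: l2) -> ssorted R (l1 ++ l2).
Proof.
elim: l1 => [|a l1 IH] /=; first by case.
move=> [H S]; split; last exact: IH.
move=> z Hz; apply: H; apply/in_or_app.
case: (in_app_or _ _ _ Hz) => Hz'; [by left | by right; right].
Qed.

Lemma ssorted_any (R : G -> G -> Prop) l x y :
  ssorted R l -> List.In x l -> List.In y l -> x = y \/ R x y \/ R y x.
Proof.
elim: l => [|a l IH] //= [H S] [<-|Hx] [<-|Hy]; auto.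
Qed.

Lemma In_take (x : G) i l : List.In x (take i l) -> List.In x l.
Proof. elim: l i => [|a l IH] [|i] //= [->|H]; eauto. Qed.
Lemma In_drop (x : G) i l : List.In x (drop i l) -> List.In x l.
Proof. elim: l i => [|a l IH] [|i] //= H; eauto. Qed.

Lemma wprod_cons (x : G) l : wprod (x :: l) = x * wprod l.
Proof. by []. Qed.

Definition SG (l : seq G) := ssorted lt l /\ forall y, List.In y l -> interval X g y.
Definition Qn (s : seq G) := forall i, i.+1 < size s -> nth 1 s i <> 1.

Lemma interval_of p w : Mon X p -> Mon X w -> p * w = g ->
  ell X p + ell X w = ell X g -> interval X g p.
Proof. move=> Hp Hw E L; split => //; exists w; split => //. Qed.

Lemma pps_good p s : s <> [::] -> List.Forall (Mon X) s -> Qn s -> Mon X p ->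
  p * wprod s = g -> ell X p + \sum_(y <- s) ell X y = ell X g -> SG (p :: pps p s).
Proof.
elim: s p => [|x s IH] p // _ F Q Hp E L.
inversion F as [|x0 s0 Hx Fs]; subst.
have [Mw Lw] := Mon_wprod F.
have Lg : ell X p + ell X (wprod (x :: s)) = ell X g.
  apply/eqP; rewrite eqn_leq; apply/andP; split.
    by rewrite -L leq_add2l.
  rewrite -E; exact: ell_sub.
have Ip : interval X g p by apply: interval_of Mw E Lg.
case: s IH F Q E L Fs Lw Mw Lg => [|y s] IH F Q E L Fs Lw Mw Lg.
  by split; [split => // z [] | move=> z [<-|[]]].
have Hpx : Mon X (p * x) by exact: MonM.
have [Ms Ls] := Mon_wprod Fs.
have Lpx : ell X (p * x) = ell X p + ell X x.
  apply/eqP; rewrite eqn_leq ell_sub //=.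
  have : ell X g <= ell X (p * x) + ell X (wprod (y :: s)).
    rewrite -E wprod_cons gmulA; apply: ell_sub => //.
  move: L; rewrite big_cons addnA => L.
  rewrite -L => H; have := leq_trans H (leq_add (leqnn _) Ls).
  by rewrite leq_add2r.
have Hx0 : x <> 1 by apply: (Q 0).
have Hlt : lt p (p * x).
  split; first by apply: ple_of => //; rewrite Lpx.
  rewrite Lpx -[X in X < _]addn0 ltn_add2l lt0n; apply/negP => /eqP E0.
  exact: Hx0 (ell0 Hx E0).
have E' : p * x * wprod (y :: s) = g by rewrite -gmulA.
have L' : ell X (p * x) + \sum_(z <- y :: s) ell X z = ell X g.
  by rewrite Lpx -addnA -L !big_cons.
have Q' : Qn (y :: s) by move=> i Hi; apply: (Q i.+1).
have [S1 S2] := IH (p * x) ltac:(by []) Fs Q' Hpx E' L'.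
rewrite pps_cons //; split.
  split; last exact: S1.
  move=> z [<-|Hz] //; apply: lt_trans Hlt _; exact: (proj1 S1) _ Hz.
move=> z [<-|Hz] //; exact: S2.
Qed.

Lemma rb_good p ys : SG (p :: ys) ->
  List.Forall (Mon X) (rb p ys) /\ Qn (rb p ys) /\
  ell X p + \sum_(y <- rb p ys) ell X y = ell X g.
Proof.
elim: ys p => [|y ys IH] p [S I].
  have [Hp [x' [Hx' [E L]]]] := I p (or_introl erefl).
  rewrite /= -E gKl; split; first by constructor.
  split; first by case.
  by rewrite big_cons big_nil addn0 E.
have [Hlt S'] := S.
have Ly := Hlt y (or_introl erefl).
have [[Hp [x' [Hx' [E L]]]] Ll] := Ly.
have [F [Q LL]] := IH y (conj S' (fun z Hz => I z (or_intror Hz))).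
have Ex : p^-1 * y = x' by rewrite -E gKl.
rewrite [rb p _]/= Ex.
split; first by constructor.
split.
  move=> [|i] /= Hi; last exact: Q.
  move=> E1; move: Ll; rewrite -L E1 ell1 addn0 ltnn //.
by rewrite big_cons addnA L.
Qed.

Lemma linfact_rb ys : ys <> [::] -> SG ys -> is_linfact X g (rb 1 ys).
Proof.
case: ys => [|y ys] // _ H.
have [F [Q L]] := rb_good H.
have Iy := (proj2 H) y (or_introl erefl).
rewrite /= ginv1 gmul1l.
split; first by case: (ys).
split; first by constructor => //; case: Iy.
split; first by move=> [|i] //= _ Hi; exact: Q.
split; first by rewrite big_cons.
by rewrite /= wprod_rb gKr.
Qed.

Lemma linfact_SG s : is_linfact X g s -> SG (pps 1 s) /\ pps 1 s <> [::].
Proof.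
move=> [Sz [F [Q [L W]]]].
case: s Sz F Q L W => [|x [|y s]] // _ F Q L W.
inversion F as [|x0 s0 Hx Fs]; subst.
rewrite pps_cons // gmul1l; split => //.
apply: pps_good => //.
- by move=> i Hi; apply: (Q i.+1).
- by rewrite -L !big_cons.
Qed.

Lemma linfact_rec s : is_linfact X g s -> rb 1 (pps 1 s) = s.
Proof.
move=> [Sz [_ [_ [_ W]]]]; apply: rb_pps; first by move=> E; rewrite E in Sz.
by rewrite gmul1l.
Qed.

Lemma insert_sorted a ys : SG ys -> interval X g a -> ~ List.In a ys ->
  (forall y, List.In y ys -> lt a y \/ lt y a) ->
  exists zs, SG zs /\ forall x, List.In x zs <-> x = a \/ List.In x ys.
Proof.
elim: ys => [|y ys IH] [S I] Ia Na Cmp.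
  exists [:: a]; split.
    split; first by split => // z [].
    by move=> z [<-|[]].
  by move=> x /=; split; [move=> [<-|[]]; left | move=> [->|[]]; left].
case: (Cmp y (or_introl erefl)) => H.
  exists (a :: y :: ys); split.
    split.
      split; last exact: S.
      move=> z [<-|Hz] //; apply: lt_trans H _; exact: (proj1 S) _ Hz.
    by move=> z [<-|Hz] //; exact: I.
  by move=> x /=; split; [move=> [<-|Hx]; [left|right] | move=> [->|Hx]; [left|right]].
have [S1 S2] := S.
have [zs [Szs Ezs]] := IH (conj S2 (fun z Hz => I z (or_intror Hz))) Ia
  (fun Ha => Na (or_intror Ha)) (fun z Hz => Cmp z (or_intror Hz)).
exists (y :: zs); split.
  split.
    split; last exact: (proj1 Szs).
    move=> z /Ezs [->|Hz] //; exact: S1.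
  move=> z [<-|Hz]; first exact: I (or_introl erefl).
  exact: (proj2 Szs).
move=> x /=; split.
  move=> [<-|/Ezs [->|Hx]]; [right; left | left | right; right] => //.
move=> [->|[<-|Hx]]; [right; apply/Ezs; left | left | right; apply/Ezs; right] => //.
Qed.

Lemma sort_exists (l : seq G) : forall C : G -> Prop,
  (forall x, C x -> List.In x l) -> (forall x, C x -> interval X g x) ->
  (forall x y, C x -> C y -> ple X x y \/ ple X y x) ->
  exists ys, SG ys /\ forall x, List.In x ys <-> C x.
Proof.
elim: l => [|a l IH] C Hl HI Hc.
  exists [::]; split; first by split.
  by move=> x; split => // /Hl.
pose C' := fun x => C x /\ x <> a.
have [ys [Sy Ey]] : exists ys, SG ys /\ forall x, List.In x ys <-> C' x.
  apply: IH.
  - move=> x [Cx Nx]; case: (Hl x Cx) => // E; by case: Nx.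
  - by move=> x [Cx _]; exact: HI.
  - by move=> x y [Cx _] [Cy _]; exact: Hc.
case: (classic (C a)) => Ca.
  have Na : ~ List.In a ys by move=> /Ey [_].
  have Cmp : forall y, List.In y ys -> lt a y \/ lt y a.
    move=> y /Ey [Cy Ny].
    case: (Hc a y Ca Cy) => H; [left | right]; apply: ple_lt => //.
      by move=> E; apply: Ny.
  have [zs [Sz Ez]] := insert_sorted Sy (HI a Ca) Na Cmp.
  exists zs; split => // x; rewrite Ez Ey /C'; split.
    by move=> [->|[]].
  move=> Cx; case: (classic (x = a)) => [->|Nx]; [by left | by right].
exists ys; split => // x; rewrite Ey /C'; split; first by case.
by move=> Cx; split => // E; subst x.
Qed.

Lemma drop_cat_size (l1 l2 : seq G) y : drop (size l1).+1 (l1 ++ y :: l2) = l2.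
Proof. by elim: l1 => [|a l1 IH] //=; rewrite drop0. Qed.

Lemma order_back n : forall b a, size b = n -> is_linfact X g a -> is_linfact X g b ->
  (forall x, List.In x (pps 1 a) -> List.In x (pps 1 b)) ->
  clos_refl_trans (seq G) (@merge_step G) b a.
Proof.
elim: n => [|n IH] b a Sb La Lb Sub.
  by case: Lb; rewrite Sb.
have [SGa Na] := linfact_SG La.
have [SGb Nb] := linfact_SG Lb.
case: (classic (forall x, List.In x (pps 1 b) -> List.In x (pps 1 a))) => H.
  have E : pps 1 a = pps 1 b.
    apply: (@ssorted_uniq lt lt_irr lt_trans); [exact: (proj1 SGa) | exact: (proj1 SGb) |].
    by move=> x; split; [apply: Sub | apply: H].
  by rewrite -(linfact_rec La) E (linfact_rec Lb); apply: rt_refl.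
have [y Hy] := not_all_ex_not _ _ H.
have [Iy Ny] := imply_to_and _ _ Hy.
have [l1 [l2 El0]] := in_split _ _ Iy.
have El : pps 1 b = (l1 ++ y :: l2)%SEQ by exact: El0.
have Hi : (size l1).+1 < size b.
  have := size_pps 1 b; rewrite El size_cat /=.
  case: (Lb) => S2 _; case: (size b) S2 => [|[|k]] // _ /= E.
  by rewrite ltnS -E addnS ltnS leq_addr.
have [Sz [Wp Pp]] := merge_props Hi.
set b' := Defs.merge _ b in Sz Wp Pp.
have Pb' : pps 1 b' = l1 ++ l2.
  by rewrite Pp El take_size_cat // drop_cat_size.
have Sub' : forall x, List.In x (pps 1 a) -> List.In x (l1 ++ l2).
  move=> x Hx; have := Sub x Hx; rewrite El => H1.
  apply/in_or_app; case: (in_app_or _ _ _ H1) => [H2|[E1|H2]]; [by left | | by right].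
  by subst x.
have SG' : SG (l1 ++ l2).
  split; first by apply: (@ssorted_del lt l1 y l2); rewrite -El; exact: (proj1 SGb).
  move=> z Hz; apply: (proj2 SGb); rewrite El; apply/in_or_app.
  by case: (in_app_or _ _ _ Hz) => H2; [left | right; right].
have N' : l1 ++ l2 <> [::].
  case: (pps 1 a) Na Sub' => [|z l] // _ /(_ z (or_introl erefl)) Hz E; by rewrite E in Hz.
have Nb' : b' <> [::] by move=> E; move: Sz Hi; rewrite E /=; case: (size b) => [|[|k]].
have Rb' : rb 1 (pps 1 b') = b'.
  apply: rb_pps => //; rewrite gmul1l Wp; exact: (proj2 (proj2 (proj2 (proj2 Lb)))).
have Lb' : is_linfact X g b' by rewrite -Rb' Pb'; exact: linfact_rb.
apply: rt_trans (rt_step _ _ _ _ _) (IH b' a _ La Lb' _).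
- by exists (size l1).
- by rewrite Sz Sb.
- by rewrite Pb'.
Qed.

Lemma order_fwd b a : clos_refl_trans (seq G) (@merge_step G) b a ->
  forall x, List.In x (pps 1 a) -> List.In x (pps 1 b).
Proof.
elim=> {a b} [s t [i [Hi ->]]|s|s t u _ IH1 _ IH2] x //.
  have [_ [_ P]] := merge_props Hi; rewrite P => H.
  case: (in_app_or _ _ _ H) => H'; [exact: In_take H' | exact: In_drop H'].
by move=> /IH2 /IH1.
Qed.

Lemma chain_of s : is_linfact X g s -> is_chain X g (fun x => List.In x (pps 1 s)).
Proof.
move=> L; have [[S I] N] := linfact_SG L.
split; first by case: (pps 1 s) N => [|z l] // _; exists z; left.
split; first by exists (pps 1 s).
split; first exact: I.
move=> x y Hx Hy; case: (ssorted_any S Hx Hy) => [<-|[[H _]|[H _]]]; [| by left | by right].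
by left; apply: ple_refl; case: (I x Hx).
Qed.

Definition fmap (s : LinFact X g) : Chain X g :=
  exist _ (fun x => List.In x (pps 1 (proj1_sig s))) (chain_of (proj2_sig s)).

Lemma fmap_inj s t : fmap s = fmap t -> s = t.
Proof.
move=> E.
have E1 : forall x, List.In x (pps 1 (proj1_sig s)) <-> List.In x (pps 1 (proj1_sig t)).
  move=> x; have := f_equal (fun C => proj1_sig C x) E => /= ->; done.
case: s t E E1 => s Ls [t Lt] _ /= E1.
have [SGs _] := linfact_SG Ls; have [SGt _] := linfact_SG Lt.
have E2 : pps 1 s = pps 1 t.
  apply: (@ssorted_uniq lt lt_irr lt_trans); [exact: (proj1 SGs) | exact: (proj1 SGt) | exact: E1].
have E3 : s = t by rewrite -(linfact_rec Ls) E2 (linfact_rec Lt).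
subst t; f_equal; apply: proof_irrelevance.
Qed.

Lemma fmap_surj C : exists s, fmap s = C.
Proof.
case: C => C [[x0 Cx0] [[l Hl] [HI Hc]]].
have [ys [Sy Ey]] := sort_exists Hl HI Hc.
have Ny : ys <> [::] by move=> E; have := proj2 (Ey x0) Cx0; rewrite E.
exists (exist _ (rb 1 ys) (linfact_rb Ny Sy)).
rewrite /fmap; move: (chain_of _).
rewrite /= pps_rb.
have -> : (fun x => List.In x ys) = C.
  apply: functional_extensionality => x; apply: propositional_extensionality; exact: Ey.
move=> p; f_equal; apply: proof_irrelevance.
Qed.

Lemma main_iso : order_iso (@fact_le G X g) (@chain_le G X g).
Proof.
exists fmap; split.
  pose h C := proj1_sig (constructive_indefinite_description _ (fmap_surj C)).
  have hK : forall C, fmap (h C) = C.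
    by move=> C; rewrite /h; case: constructive_indefinite_description.
  exists h; first by move=> s; apply: fmap_inj; rewrite hK.
  exact: hK.
move=> [a La] [b Lb]; rewrite /fact_le /chain_le /=; split.
  exact: order_fwd.
exact: order_back erefl La Lb.
Qed.
End S.

Theorem proposition3p4 (G : GroupT) (X : G -> Prop) (g : G) :
  conj_closed X -> generates X -> Mon X g ->
  order_iso (@fact_le G X g) (@chain_le G X g).
Proof. move=> _ _ _; exact: main_iso. Qed.
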